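(* Let $(u_n)_{n\in\mathbb Z}$ be a 4-chain and $i\in\mathbb Z$. If $1<|u_i|<|u_{i+1}|$, then $|u_{i+2}|>|u_{i+1}|$. If $|u_i|>|u_{i+1}|>1$, then $|u_{i-1}|>|u_i|$. Consequently, if a 4-chain has no term of absolute value $1$ (and no two consecutive terms of equal absolute value), it has a unique term $u_0$ of least absolute value (after reindexing), and $\cdots>|u_{-2}|>|u_{-1}|>|u_0|<|u_1|<|u_2|<\cdots$.
   Context: A 4-chain is a bi-infinite sequence of integers $(u_n)_{n\in\mathbb Z}$ satisfying $u_{n-1}u_{n+1}=u_n^3+u_n^{f(n)}+1$ for all $n\in\mathbb Z$, where $f(n)=1$ if $n\equiv 0,3\pmod 4$ and $f(n)=2$ if $n\equiv 1,2\pmod 4$. *)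

(* Defs.v *)
From Stdlib Require Import ZArith Lia.
Open Scope Z_scope.

Definition f4 (n : Z) : Z :=
  let r := n mod 4 in
  if orb (r =? 0) (r =? 3) then 1 else 2.

Definition is_4chain (u : Z -> Z) : Prop :=
  forall n : Z, u (n - 1) * u (n + 1) = u n ^ 3 + u n ^ (f4 n) + 1.

(* Main.v *)
Require Import Defs.
From Stdlib Require Import ZArith Lia Classical.
Open Scope Z_scope.

Lemma key a b c e : (e = 1 \/ e = 2) -> a*c = b^3 + b^e + 1 -> 1 < Z.abs a < Z.abs b -> Z.abs c > Z.abs b.
Proof.
  intros He H [H1 H2].
  destruct He as [->| ->]; rewrite ?Z.pow_1_r in H;
  replace (b^3) with (b*b*b) in H by ring; try replace (b^2) with (b*b) in H by ring;
  destruct (Z.abs_spec a) as [[? Ha]|[? Ha]]; rewrite Ha in *;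
  destruct (Z.abs_spec b) as [[? Hb]|[? Hb]]; rewrite Hb in *;
  destruct (Z.abs_spec c) as [[? Hc]|[? Hc]]; rewrite Hc in *; nia.
Qed.

Lemma f4_12 n : f4 n = 1 \/ f4 n = 2.
Proof. unfold f4. destruct (_ || _)%bool; auto. Qed.

Lemma part1 u (hu : is_4chain u) : forall i : Z, 1 < Z.abs (u i) < Z.abs (u (i + 1)) ->
     Z.abs (u (i + 2)) > Z.abs (u (i + 1)).
Proof.
  intros i Hi. pose proof (hu (i+1)) as H.
  replace (i+1-1) with i in H by ring. replace (i+1+1) with (i+2) in H by ring.
  eapply key; [apply f4_12| exact H | exact Hi].
Qed.

Lemma part2 u (hu : is_4chain u) : forall i : Z, Z.abs (u i) > Z.abs (u (i + 1)) /\ Z.abs (u (i + 1)) > 1 ->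
     Z.abs (u (i - 1)) > Z.abs (u i).
Proof.
  intros i [Hi1 Hi2]. pose proof (hu i) as H.
  rewrite Z.mul_comm in H.
  eapply key; [apply f4_12| exact H | lia].
Qed.

Lemma exmin (g : Z -> Z) : (forall n, 0 <= g n) -> exists m, forall n, g m <= g n.
Proof.
  intros Hg.
  assert (forall k, 0 <= k -> forall n, g n = k -> exists m, forall n', g m <= g n').
  { intros k Hk. pattern k. apply (Zlt_0_ind _); [|exact Hk].
    intros x IH Hx n Hn.
    destruct (classic (exists n', g n' < x)) as [[n' Hn']|Hno].
    - apply (IH (g n') ltac:(split; [apply Hg|lia]) n' eq_refl).
    - exists n. intros n'. destruct (Z_lt_le_dec (g n') (g n)); [|lia].
      exfalso; apply Hno; exists n'; lia. }
  apply (H (g 0) (Hg 0) 0 eq_refl).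
Qed.

Theorem mainTheorem9 (u : Z -> Z) (hu : is_4chain u) :
  (forall i : Z, 1 < Z.abs (u i) < Z.abs (u (i + 1)) ->
     Z.abs (u (i + 2)) > Z.abs (u (i + 1))) /\
  (forall i : Z, Z.abs (u i) > Z.abs (u (i + 1)) /\ Z.abs (u (i + 1)) > 1 ->
     Z.abs (u (i - 1)) > Z.abs (u i)) /\
  ((forall n : Z, Z.abs (u n) <> 1) ->
   (forall n : Z, Z.abs (u n) <> Z.abs (u (n + 1))) ->
   exists m : Z,
     (forall n : Z, n <> m -> Z.abs (u m) < Z.abs (u n)) /\
     (forall n : Z, n < m -> Z.abs (u n) > Z.abs (u (n + 1))) /\
     (forall n : Z, m <= n -> Z.abs (u (n + 1)) > Z.abs (u n))).
Proof.
  split; [apply part1; exact hu|]. split; [apply part2; exact hu|].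
  intros H1 Hneq.
  assert (H2 : forall n, 2 <= Z.abs (u n)).
  { intros n. destruct (Z.eq_dec (u n) 0) as [E|E]; [|specialize (H1 n); lia].
    pose proof (hu n) as Hn. rewrite E in Hn.
    assert (Hn' : u (n-1) * u (n+1) = 1) by (destruct (f4_12 n) as [F|F]; rewrite F in Hn; exact Hn).
    clear Hn.
    exfalso. apply (H1 (n+1)).
    rewrite Z.mul_comm in Hn'. destruct (Z.eq_mul_1 _ _ Hn') as [->| ->]; reflexivity. }
  destruct (exmin (fun n => Z.abs (u n)) (fun n => Z.abs_nonneg (u n))) as [m Hm].
  simpl in Hm.
  assert (Fw : forall k : nat, Z.abs (u (m + Z.of_nat k + 1)) > Z.abs (u (m + Z.of_nat k))).
  { induction k.
    - simpl. rewrite Z.add_0_r. specialize (Hm (m+1)). specialize (Hneq m). lia.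
    - pose proof (part1 u hu (m + Z.of_nat k)) as P.
      replace (m + Z.of_nat k + 2) with (m + Z.of_nat (S k) + 1) in P by lia.
      replace (m + Z.of_nat k + 1) with (m + Z.of_nat (S k)) in P, IHk by lia.
      specialize (H2 (m + Z.of_nat k)). lia. }
  assert (Bw : forall k : nat, Z.abs (u (m - Z.of_nat k - 1)) > Z.abs (u (m - Z.of_nat k))).
  { induction k.
    - simpl. rewrite Z.sub_0_r. specialize (Hm (m-1)). specialize (Hneq (m-1)).
      replace (m-1+1) with m in Hneq by ring. lia.
    - pose proof (part2 u hu (m - Z.of_nat k - 1)) as P.
      replace (m - Z.of_nat k - 1 - 1) with (m - Z.of_nat (S k) - 1) in P by lia.
      replace (m - Z.of_nat k - 1) with (m - Z.of_nat (S k)) in P, IHk by lia.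
      replace (m - Z.of_nat (S k) + 1) with (m - Z.of_nat k) in P by lia.
      specialize (H2 (m - Z.of_nat k)). lia. }
  assert (Fw2 : forall k : nat, Z.abs (u (m + Z.of_nat k + 1)) > Z.abs (u m)).
  { induction k.
    - specialize (Fw 0%nat). simpl in Fw. rewrite Z.add_0_r in Fw. simpl. rewrite Z.add_0_r. lia.
    - specialize (Fw (S k)). replace (m + Z.of_nat (S k)) with (m + Z.of_nat k + 1) in Fw at 2 by lia. lia. }
  assert (Bw2 : forall k : nat, Z.abs (u (m - Z.of_nat k - 1)) > Z.abs (u m)).
  { induction k.
    - specialize (Bw 0%nat). simpl in *. rewrite Z.sub_0_r in *. lia.
    - specialize (Bw (S k)). replace (m - Z.of_nat (S k)) with (m - Z.of_nat k - 1) in Bw at 2 by lia. lia. }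
  exists m. split; [|split].
  - intros n Hn. destruct (Z.lt_ge_cases n m).
    + specialize (Bw2 (Z.to_nat (m - n - 1))). rewrite Z2Nat.id in Bw2 by lia.
      replace (m - (m - n - 1) - 1) with n in Bw2 by ring. lia.
    + specialize (Fw2 (Z.to_nat (n - m - 1))). rewrite Z2Nat.id in Fw2 by lia.
      replace (m + (n - m - 1) + 1) with n in Fw2 by ring. lia.
  - intros n Hn. specialize (Bw (Z.to_nat (m - n - 1))). rewrite Z2Nat.id in Bw by lia.
    replace (m - (m - n - 1) - 1) with n in Bw by ring.
    replace (m - (m - n - 1)) with (n+1) in Bw by ring. exact Bw.
  - intros n Hn. specialize (Fw (Z.to_nat (n - m))). rewrite Z2Nat.id in Fw by lia.
    replace (m + (n - m)) with n in Fw by ring. exact Fw.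
Qed.
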